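(* The generating function $\sum_{n\ge0}2^{n(n+3)/2}x^n$ (sequence $1,4,32,512,16384,\dots$) has, as formal power series, the Jacobi continued fraction expansion $$\sum_{n\ge0}2^{n(n+3)/2}x^n=\cfrac{1}{1-\beta_0x-\cfrac{\lambda_1x^2}{1-\beta_1x-\cfrac{\lambda_2x^2}{1-\beta_2x-\cdots}}},\qquad \beta_n=2^{n+1}(2^{n+1}+2^{n}-1),\ \ \lambda_n=2^{3n+1}(2^{n}-1),$$ (so $\beta_0,\beta_1,\beta_2,\dots=4,20,88,368,\dots$ and $\lambda_1,\lambda_2,\dots=16,384,7168,\dots$), and equivalently the Stieltjes continued fraction expansion $$\sum_{n\ge0}2^{n(n+3)/2}x^n=\cfrac{1}{1-\cfrac{b(0)x}{1-\cfrac{b(1)x}{1-\cfrac{b(2)x}{1-\cdots}}}},\qquad b(n)=2^{n+2}-2^{(n+1)/2}\bigl(1-(-1)^n\bigr)\ (n\ge0),$$ so that $b(0),b(1),b(2),\dots=4,4,16,24,64,\dots$. *)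

(* Defs.v *)
From HB Require Import structures.
From mathcomp Require Import all_boot all_order all_algebra.
Set Implicit Arguments. Unset Strict Implicit. Unset Printing Implicit Defensive.
Import Order.TTheory GRing.Theory Num.Theory.
Local Open Scope ring_scope.

Definition series := nat -> int.

Definition s_one : series := fun n => (n == 0%N)%:R.
Definition s_x : series := fun n => (n == 1%N)%:R.

Definition s_add (a b : series) : series := fun n => a n + b n.
Definition s_sub (a b : series) : series := fun n => a n - b n.
Definition s_scale (c : int) (a : series) : series := fun n => c * a n.
Definition s_mul (a b : series) : series :=
  fun n => \sum_(i < n.+1) a i * b (n - i)%N.

(* list of the first n+1 coefficients of the multiplicative inverse of a
   series a with constant term 1 *)
Fixpoint inv_list (a : series) (n : nat) : seq int :=
  match n with
  | 0 => [:: 1]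
  | m.+1 => let l := inv_list a m in
            rcons l (- \sum_(1 <= i < m.+2) a i * nth 0 l (m.+1 - i)%N)
  end.

Definition s_inv (a : series) : series := fun n => nth 0 (inv_list a n) n.

Fixpoint Jconv (beta lam : nat -> int) (N k : nat) : series :=
  match N with
  | 0 => s_one
  | M.+1 => s_inv (s_sub (s_sub s_one (s_scale (beta k) s_x))
                        (s_scale (lam k.+1)
                           (s_mul (s_mul s_x s_x) (Jconv beta lam M k.+1))))
  end.

Fixpoint Sconv (b : nat -> int) (N k : nat) : series :=
  match N with
  | 0 => s_one
  | M.+1 => s_inv (s_sub s_one (s_scale (b k) (s_mul s_x (Sconv b M k.+1))))
  end.

(* f is the (formal power series) value of the infinite J-fraction:
   each coefficient of the convergents eventually equals that of f. *)
Definition has_Jfraction (beta lam : nat -> int) (f : series) : Prop :=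
  forall n, exists N0, forall N, (N0 <= N)%N -> Jconv beta lam N 0 n = f n.

Definition has_Sfraction (b : nat -> int) (f : series) : Prop :=
  forall n, exists N0, forall N, (N0 <= N)%N -> Sconv b N 0 n = f n.

Definition gf4 : series := fun n => 2 ^+ ((n * (n + 3)) %/ 2)%N.
Definition beta4 (n : nat) : int := 2 ^+ n.+1 * (2 ^+ n.+1 + 2 ^+ n - 1).
Definition lam4 (n : nat) : int := 2 ^+ (3 * n + 1)%N * (2 ^+ n - 1).
(* b(n) = 2^{n+2} - 2^{(n+1)/2} (1 - (-1)^n); the exponent (n+1)/2 is only
   relevant when n is odd (otherwise the factor 1-(-1)^n vanishes). *)
Definition b4 (n : nat) : int := 2 ^+ (n + 2)%N - 2 ^+ ((n + 1) %/ 2)%N * (1 - (-1) ^+ n).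

(* Main.v *)
Require Import Defs.
From HB Require Import structures.
From mathcomp Require Import all_boot all_order all_algebra.
From mathcomp Require Import ring zify lra.
Set Implicit Arguments. Unset Strict Implicit. Unset Printing Implicit Defensive.
Import Order.TTheory GRing.Theory Num.Theory.
Local Open Scope ring_scope.

Definition cong (M : nat) (p q : {poly int}) := exists r : {poly int}, p - q = r * 'X^M.

Lemma cong_refl M p : cong M p p.
Proof. by exists 0; rewrite subrr mul0r. Qed.
Lemma cong_sym M p q : cong M p q -> cong M q p.
Proof. by case=> r h; exists (- r); rewrite mulNr -h opprB. Qed.
Lemma cong_trans M p q s : cong M p q -> cong M q s -> cong M p s.
Proof. by case=> r h [t h']; exists (r + t); rewrite mulrDl -h -h' addrA subrK. Qed.
Lemma congD M p q p' q' : cong M p q -> cong M p' q' -> cong M (p + p') (q + q').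
Proof. by case=> r h [t h']; exists (r + t); rewrite mulrDl -h -h'; ring. Qed.
Lemma congN M p q : cong M p q -> cong M (- p) (- q).
Proof. by case=> r h; exists (- r); rewrite mulNr -h; ring. Qed.
Lemma congB M p q p' q' : cong M p q -> cong M p' q' -> cong M (p - p') (q - q').
Proof. by move=> h1 h2; apply: congD => //; apply: congN. Qed.
Lemma congM M p q p' q' : cong M p q -> cong M p' q' -> cong M (p * p') (q * q').
Proof.
case=> r h [t h']; exists (r * p' + q * t).
by rewrite mulrDl -mulrA (mulrC p') mulrA -h -mulrA -h'; ring.
Qed.
Lemma cong_eq M p q : p = q -> cong M p q.
Proof. by move=> ->; apply: cong_refl. Qed.
Lemma cong_coef M p q : cong M p q -> forall i, (i < M)%N -> p`_i = q`_i.
Proof.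
case=> r h i hi; apply/eqP; rewrite -subr_eq0 -coefB h coefMXn.
by rewrite hi.
Qed.
Lemma coef_cong M (p q : {poly int}) : (forall i, (i < M)%N -> p`_i = q`_i) -> cong M p q.
Proof.
move=> h; exists (drop_poly M (p - q)).
rewrite -{1}(poly_take_drop M (p - q)).
have -> : take_poly M (p - q) = 0.
  apply/polyP => i; rewrite coef_take_poly coef0 coefB.
  by case: ifP => // /h ->; rewrite subrr.
by rewrite add0r.
Qed.
Lemma cong_le M M' p q : (M' <= M)%N -> cong M p q -> cong M' p q.
Proof.
move=> hM [r h]; exists (r * 'X^(M - M')).
by rewrite h -mulrA -exprD subnK.
Qed.
Lemma cong_X M p q : cong M p q -> cong M.+1 ('X * p) ('X * q).
Proof. by case=> r h; exists r; rewrite -mulrBr h exprS; ring. Qed.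

Definition tr (M : nat) (a : series) : {poly int} := \poly_(i < M) a i.
Lemma coef_tr M a i : (tr M a)`_i = if (i < M)%N then a i else 0.
Proof. by rewrite coef_poly. Qed.

Lemma tr_cong M a (p : {poly int}) : (forall i, (i < M)%N -> a i = p`_i) -> cong M (tr M a) p.
Proof. by move=> h; apply: coef_cong => i hi; rewrite coef_tr hi h. Qed.
Lemma cong_tr M a b : cong M (tr M a) (tr M b) -> forall i, (i < M)%N -> a i = b i.
Proof. by move=> h i hi; move: (cong_coef h hi); rewrite !coef_tr hi. Qed.

Lemma tr_mul M a b : cong M (tr M (s_mul a b)) (tr M a * tr M b).
Proof.
apply: tr_cong => i hi; rewrite coefM /s_mul; apply: eq_bigr => j _.
rewrite !coef_tr (leq_ltn_trans (leq_subr _ _) hi).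
by rewrite (leq_ltn_trans _ hi) // -ltnS.
Qed.
Lemma tr_add M a b : cong M (tr M (s_add a b)) (tr M a + tr M b).
Proof. by apply: tr_cong => i hi; rewrite coefD !coef_tr hi. Qed.
Lemma tr_sub M a b : cong M (tr M (s_sub a b)) (tr M a - tr M b).
Proof. by apply: tr_cong => i hi; rewrite coefB !coef_tr hi. Qed.
Lemma tr_scale M c a : cong M (tr M (s_scale c a)) (c%:P * tr M a).
Proof. by apply: tr_cong => i hi; rewrite coefCM !coef_tr hi. Qed.
Lemma tr_one M : cong M (tr M s_one) 1.
Proof. by apply: tr_cong => i hi; rewrite coef1 /s_one; case: (i == 0)%N. Qed.
Lemma tr_x M : cong M (tr M s_x) 'X.
Proof. by apply: tr_cong => i hi; rewrite coefX /s_x; case: (i == 1)%N. Qed.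

Definition sh (a : series) : series := fun n => if n is n'.+1 then a n' else 0.
Lemma tr_sh M a : cong M.+1 (tr M.+1 (sh a)) ('X * tr M a).
Proof.
apply: tr_cong => -[|i] hi; rewrite coefXM //=.
by rewrite coef_tr -ltnS hi.
Qed.
Lemma mul_x a n : s_mul s_x a n = sh a n.
Proof.
rewrite /s_mul; case: n => [|n]; first by rewrite big_ord1 /s_x /= mul0r.
rewrite big_ord_recl /s_x /= mul0r add0r big_ord_recl /= mul1r subSS subn0.
rewrite big1 ?addr0 // => i _; by rewrite mul0r.
Qed.

Lemma size_inv_list a n : size (inv_list a n) = n.+1.
Proof. by elim: n => //= n IH; rewrite size_rcons IH. Qed.
Lemma inv_list_prefix a m n i : (m <= n)%N -> (i <= m)%N ->
  nth 0 (inv_list a n) i = nth 0 (inv_list a m) i.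
Proof.
elim: n => [|n IH] hmn him.
  by move: hmn; rewrite leqn0 => /eqP ->.
case: (ltngtP m n.+1) hmn => // [hlt|->] _ ; last by [].
rewrite /= nth_rcons size_inv_list (leq_ltn_trans him hlt).
by apply: IH.
Qed.
Lemma s_inv0 a : s_inv a 0 = 1.
Proof. by []. Qed.
Lemma s_invS a m : s_inv a m.+1 =
  - \sum_(1 <= i < m.+2) a i * s_inv a (m.+1 - i)%N.
Proof.
rewrite /s_inv /= nth_rcons size_inv_list ltnn eqxx; congr (- _).
rewrite !big_nat; apply: eq_bigr => i /andP[h1 h2]; congr (_ * _).
rewrite (inv_list_prefix a (m := (m.+1 - i)%N)) //; lia.
Qed.
Lemma s_inv_mul a : a 0%N = 1 -> forall n, s_mul a (s_inv a) n = s_one n.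
Proof.
move=> a0 [|m]; first by rewrite /s_mul big_ord1 a0 mul1r.
rewrite /s_mul /s_one /= -(big_mkord xpredT (fun i => a i * s_inv a (m.+1 - i)%N)).
rewrite big_ltn // a0 mul1r subn0 s_invS.
by rewrite addNr.
Qed.
Lemma tr_inv M a : a 0%N = 1 -> cong M (tr M a * tr M (s_inv a)) 1.
Proof.
move=> a0; apply: cong_trans (cong_sym (tr_mul _ _ _)) _.
apply: cong_trans (tr_one M); apply: coef_cong => i hi.
by rewrite !coef_tr hi s_inv_mul.
Qed.

Lemma tr_shM M a : cong M.+1 (tr M.+1 (sh a)) ('X * tr M.+1 a).
Proof.
apply: tr_cong => -[|i] hi; rewrite coefXM //=.
by rewrite coef_tr ltnW.
Qed.

Lemma S_conv (b : nat -> int) (P : nat -> series) :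
  (forall k, P k 0%N = 1) ->
  (forall k n, P k n = P k.+1 n - b k * sh (P k.+2) n) ->
  forall N k i, (i < N)%N -> s_mul (Sconv b N k) (P k) i = P k.+1 i.
Proof.
move=> P0 Prec; elim=> [//|N IH] k i hi.
set M := N.+1.
set S' := Sconv b N k.+1.
set A := s_sub s_one (s_scale (b k) (s_mul s_x S')).
have -> : Sconv b M k = s_inv A by [].
have A0 : A 0%N = 1 by rewrite /A /s_sub /s_scale mul_x /= mulr0 subr0.
apply: (cong_tr _ hi).
have hA : cong M (tr M A) (1 - (b k)%:P * ('X * tr M S')).
  apply: cong_trans (tr_sub _ _ _) _; apply: congB; first exact: tr_one.
  apply: cong_trans (tr_scale _ _ _) _; apply: congM; first exact: cong_refl.
  apply: cong_trans (tr_mul _ _ _) _; apply: congM; [exact: tr_x|exact: cong_refl].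
have hI : cong N (tr M S' * tr M (P k.+1)) (tr M (P k.+2)).
  apply: cong_trans (cong_sym (cong_le (leqnSn N) (tr_mul M S' (P k.+1)))) _.
  apply: coef_cong => j hj; have hjM : (j < M)%N by rewrite /M; lia.
  rewrite !coef_tr hjM IH //.
have hIX := cong_X hI.
have hP : cong M (tr M (P k)) (tr M (P k.+1) - (b k)%:P * ('X * tr M (P k.+2))).
  apply: coef_cong => j hj; rewrite coefB coefCM coefXM !coef_tr hj Prec.
  case: j hj => [|j] hj //=; have hjM : (j < M)%N by rewrite /M; lia.
  by rewrite hjM.
have hAP : cong M (tr M A * tr M (P k.+1)) (tr M (P k)).
  apply: cong_trans (congM hA (cong_refl _ _)) _.
  apply: cong_trans _ (cong_sym hP).
  apply: cong_trans (cong_eq _ (_ : _ = tr M (P k.+1) - (b k)%:P * ('X * (tr M S' * tr M (P k.+1))))) _.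
    by ring.
  apply: congB; first exact: cong_refl.
  by apply: congM; [exact: cong_refl | exact: hIX].
apply: cong_trans (tr_mul _ _ _) _.
apply: cong_trans (congM (cong_refl _ _) (cong_sym hAP)) _.
apply: cong_trans (cong_eq _ (_ : _ = (tr M A * tr M (s_inv A)) * tr M (P k.+1))) _.
  by ring.
apply: cong_trans (congM (tr_inv M A0) (cong_refl _ _)) _.
by rewrite mul1r; apply: cong_refl.
Qed.

Lemma J_conv (beta lam : nat -> int) (Q : nat -> series) :
  (forall k, Q k 0%N = 1) ->
  (forall k n, Q k n = Q k.+1 n - beta k * sh (Q k.+1) n - lam k.+1 * sh (sh (Q k.+2)) n) ->
  forall N k i, (i < N)%N -> s_mul (Jconv beta lam N k) (Q k) i = Q k.+1 i.
Proof.
move=> Q0 Qrec; elim=> [//|N IH] k i hi.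
set M := N.+1.
set S' := Jconv beta lam N k.+1.
set A := s_sub (s_sub s_one (s_scale (beta k) s_x))
                (s_scale (lam k.+1) (s_mul (s_mul s_x s_x) S')).
have -> : Jconv beta lam M k = s_inv A by [].
have A0 : A 0%N = 1.
  by rewrite /A /s_sub /s_scale /s_mul !big_ord1 /s_x /s_one /= !mul0r !mulr0 !subr0.
apply: (cong_tr _ hi).
have hA : cong M (tr M A) (1 - (beta k)%:P * 'X - (lam k.+1)%:P * ('X * 'X * tr M S')).
  apply: cong_trans (tr_sub _ _ _) _; apply: congB.
    apply: cong_trans (tr_sub _ _ _) _; apply: congB; first exact: tr_one.
    apply: cong_trans (tr_scale _ _ _) _; apply: congM; first exact: cong_refl.
    exact: tr_x.
  apply: cong_trans (tr_scale _ _ _) _; apply: congM; first exact: cong_refl.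
  apply: cong_trans (tr_mul _ _ _) _; apply: congM; last exact: cong_refl.
  apply: cong_trans (tr_mul _ _ _) _; apply: congM; exact: tr_x.
have hI : cong N (tr M S' * tr M (Q k.+1)) (tr M (Q k.+2)).
  apply: cong_trans (cong_sym (cong_le (leqnSn N) (tr_mul M S' (Q k.+1)))) _.
  apply: coef_cong => j hj; have hjM : (j < M)%N by rewrite /M; lia.
  rewrite !coef_tr hjM IH //.
have hIX := cong_le (leqnSn _) (cong_X (cong_X hI)).
have hP : cong M (tr M (Q k)) (tr M (Q k.+1) - (beta k)%:P * ('X * tr M (Q k.+1))
               - (lam k.+1)%:P * ('X * ('X * tr M (Q k.+2)))).
  apply: coef_cong => j hj; rewrite !coefB !coefCM !coefXM !coef_tr hj Qrec.
  case: j hj => [|j] hj //=; have hjM : (j < M)%N by rewrite /M; lia.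
  rewrite hjM; case: j hj hjM => [|j] hj hjM //=; have hjM' : (j < M)%N by rewrite /M; lia.
  by rewrite hjM'.
have hAP : cong M (tr M A * tr M (Q k.+1)) (tr M (Q k)).
  apply: cong_trans (congM hA (cong_refl _ _)) _.
  apply: cong_trans _ (cong_sym hP).
  apply: cong_trans (cong_eq _ (_ : _ = tr M (Q k.+1) - (beta k)%:P * ('X * tr M (Q k.+1))
     - (lam k.+1)%:P * ('X * ('X * (tr M S' * tr M (Q k.+1)))))) _.
    by ring.
  apply: congB; first exact: cong_refl.
  by apply: congM; [exact: cong_refl | exact: hIX].
apply: cong_trans (tr_mul _ _ _) _.
apply: cong_trans (congM (cong_refl _ _) (cong_sym hAP)) _.
apply: cong_trans (cong_eq _ (_ : _ = (tr M A * tr M (s_inv A)) * tr M (Q k.+1))) _.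
  by ring.
apply: cong_trans (congM (tr_inv M A0) (cong_refl _ _)) _.
by rewrite mul1r; apply: cong_refl.
Qed.

Lemma mul_one_r a i : s_mul a s_one i = a i.
Proof.
have h := tr_mul i.+1 a s_one.
have h2 : cong i.+1 (tr i.+1 (s_mul a s_one)) (tr i.+1 a).
  apply: cong_trans h _; apply: cong_trans (congM (cong_refl _ _) (tr_one _)) _.
  rewrite mulr1; exact: cong_refl.
by apply: (cong_tr h2).
Qed.

Fixpoint D (n : nat) : nat -> int :=
  match n with
  | 0 => fun _ => 1
  | n'.+1 => fix Dn j := match j with
                        | 0 => 1
                        | j'.+1 => Dn j' + 2 ^+ j'.+1 * D n' j'.+1
                        end
  end.

Lemma D0j j : D 0 j = 1. Proof. by []. Qed.
Lemma Dn0 n : D n 0 = 1. Proof. by case: n. Qed.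
Lemma DSS n j : D n.+1 j.+1 = D n.+1 j + 2 ^+ j.+1 * D n j.+1. Proof. by []. Qed.

Definition Dr (n j : nat) : rat :=
  \prod_(i < j) ((2 ^+ (n + i + 1) - 1) / (2 ^+ (i + 1) - 1)).

Lemma pw1 k : (0 < k)%N -> (2 : rat) ^+ k - 1 != 0.
Proof.
move=> hk; rewrite subr_eq0; apply/eqP => h.
have : (1 : rat) < 2 ^+ k by rewrite exprn_egt1 ?(gtn_eqF hk) //; lra.
by rewrite h ltxx.
Qed.

Lemma L1 n j : Dr n j.+1 = Dr n j * ((2 ^+ (n + j + 1) - 1) / (2 ^+ (j + 1) - 1)).
Proof. by rewrite /Dr big_ord_recr. Qed.

Lemma L2 n j : Dr n.+1 j * (2 ^+ (n + 1) - 1) = Dr n j * (2 ^+ (n + j + 1) - 1).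
Proof.
elim: j => [|j IH]; first by rewrite /Dr !big_ord0 addn0.
rewrite !L1 (_ : (n.+1 + j + 1 = n + j.+1 + 1)%N); last lia.
transitivity ((Dr n.+1 j * (2 ^+ (n + 1) - 1)) *
   ((2 ^+ (n + j.+1 + 1) - 1) / (2 ^+ (j + 1) - 1))); first by ring.
rewrite IH; ring.
Qed.

Lemma Pascal n j : Dr n.+1 j.+1 = Dr n.+1 j + 2 ^+ (j + 1) * Dr n j.+1.
Proof.
have hZ : (2 : rat) ^+ (n + 1) - 1 != 0 by apply: pw1; rewrite addn1.
have hW : (2 : rat) ^+ (j + 1) - 1 != 0 by apply: pw1; rewrite addn1.
have hD : Dr n.+1 j = Dr n j * (2 ^+ (n + j + 1) - 1) / (2 ^+ (n + 1) - 1).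
  by rewrite -L2 mulfK.
rewrite !L1 hD (_ : (n.+1 + j + 1 = (n + 1) + (j + 1))%N); last lia.
rewrite (exprD _ (n + 1) (j + 1)).
move: hZ hW; move: (Dr n j) ((2:rat) ^+ (n + j + 1)) ((2:rat) ^+ (n + 1)) ((2:rat) ^+ (j + 1)) => d x u v hZ hW.
by field; rewrite hZ hW.
Qed.

Lemma D_rat n j : (D n j)%:~R = Dr n j :> rat.
Proof.
elim: n j => [|n IHn] j.
  rewrite D0j /Dr big1 // => i _; by rewrite add0n divff //; apply: pw1; rewrite addn1.
induction j as [|j IHj]; first by rewrite /Dr big_ord0.
rewrite DSS rmorphD rmorphM /= IHj IHn rmorphXn /= Pascal addn1.
by [].
Qed.

Lemma cast2 k : ((2:int) ^+ k)%:~R = (2:rat) ^+ k.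
Proof. by rewrite rmorphXn. Qed.

Lemma absorb n j : (2 ^+ (n + 1) - 1) * D n.+1 j = (2 ^+ (j + 1) - 1) * D n j.+1 :> int.
Proof.
apply/eqP; rewrite -(@eqr_int rat); apply/eqP.
rewrite !intrM !intrB !D_rat !cast2 (_ : 1%:~R = 1 :> rat) //.
rewrite mulrC L2 L1.
have hW : (2 : rat) ^+ (j + 1) - 1 != 0 by apply: pw1; rewrite addn1.
move: hW; move: (Dr n j) ((2:rat) ^+ (n + j + 1)) ((2:rat) ^+ (j + 1)) => d x v hW.
by field.
Qed.

Definition ex (n : nat) : nat := ('C(n, 2) + 2 * n)%N.
Lemma exS m : ex m.+1 = (ex m + m + 2)%N.
Proof. rewrite /ex binS bin1; lia. Qed.

Definition P (k : nat) : series :=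
  match k with
  | 0 => s_one
  | k'.+1 => fun n => 2 ^+ (ex n + k'.+1./2 * n)%N * D n k'./2
  end.

Lemma P_odd j n : P (j.*2).+1 n = 2 ^+ (ex n + j * n)%N * D n j.
Proof. by rewrite /P /= uphalf_double doubleK. Qed.
Lemma P_even j n : P (j.*2).+2 n = 2 ^+ (ex n + j.+1 * n)%N * D n j.
Proof. by rewrite /P /= uphalf_double doubleK. Qed.
Lemma P0 k : P k 0%N = 1.
Proof. case: k => [|k] //; by rewrite /P D0j mulr1 /ex bin0n !muln0. Qed.

Lemma b4_even j : b4 j.*2 = 2 ^+ (j.*2 + 2)%N.
Proof. by rewrite /b4 -signr_odd odd_double expr0 subrr mulr0 subr0. Qed.
Lemma b4_odd j : b4 (j.*2).+1 = 2 ^+ (j.*2.+1 + 2)%N - 2 ^+ j.+1 * 2.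
Proof.
rewrite /b4 -signr_odd /= odd_double /= expr1 opprK.
by rewrite (_ : ((j.*2).+1 + 1) %/ 2 = j.+1)%N; [|rewrite -muln2; lia].
Qed.

Lemma Prec0 n : P 0 n = P 1 n - b4 0 * sh (P 2) n.
Proof.
have -> : b4 0 = 4 by [].
rewrite /P /=.
case: n => [|m] /=; first by rewrite /s_one /= ?Dn0 /ex ?bin0n ?muln0 ?mulr0 ?subr0 ?mulr1.
rewrite /s_one /= !Dn0 exS !mulr1 !mul0n !mul1n !addn0.
rewrite exprD; ring.
Qed.

Lemma shS a m : sh a m.+1 = a m. Proof. by []. Qed.
Lemma sh0 a : sh a 0 = 0. Proof. by []. Qed.

Lemma Prec_odd j n : P (j.*2).+1 n = P (j.*2).+2 n - b4 (j.*2).+1 * sh (P (j.*2).+3) n.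
Proof.
rewrite -[(j.*2).+3]/((j.+1).*2).+1 b4_odd.
case: n => [|m]; first by rewrite sh0 !P0 mulr0 subr0.
rewrite shS !P_odd P_even.
have H := absorb m j.
rewrite exS (_ : (ex m + m + 2 + j * m.+1 = (ex m + j.+1 * m) + (j + 1) + 1)%N); last nia.
rewrite (_ : (ex m + m + 2 + j.+1 * m.+1 = (ex m + j.+1 * m) + (j + 1) + 1 + (m + 1))%N); last nia.
rewrite (_ : ((j.*2).+1 + 2 = (j + 1) + (j + 1) + 1)%N); last (rewrite -muln2; lia).
move: (ex m + j.+1 * m)%N => E3.
rewrite !exprD !expr1 ?addn1 !exprS.
rewrite !exprD !expr1 in H.
apply/eqP; rewrite -subr_eq0.
rewrite (_ : _ - _ = - (2 * (2 * 2 ^+ j) * 2 ^+ E3) * ((2 ^+ m * 2 - 1) * D m.+1 j - (2 ^+ j * 2 - 1) * D m j.+1)); last by ring.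
by rewrite H subrr mulr0.
Qed.

Lemma Prec_even j n : P (j.*2).+2 n = P (j.*2).+3 n - b4 (j.*2).+2 * sh (P (j.*2).+4) n.
Proof.
rewrite -[(j.*2).+3]/((j.+1).*2).+1 -[(j.*2).+4]/((j.+1).*2).+2 -[b4 (j.*2).+2]/(b4 (j.+1).*2).
rewrite b4_even.
case: n => [|m]; first by rewrite sh0 !P0 mulr0 subr0.
rewrite shS P_odd !P_even DSS mulrA -exprD.
rewrite (_ : ((j.+1).*2 + 2 + (ex m + (j.+2) * m) = (ex m.+1 + j.+1 * m.+1) + j.+1)%N); last first.
  rewrite exS -muln2; nia.
move: (ex m.+1 + j.+1 * m.+1)%N => E. rewrite exprD; move: ((2:int) ^+ j.+1) ((2:int) ^+ E) => a t; ring.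
Qed.

Lemma Prec k n : P k n = P k.+1 n - b4 k * sh (P k.+2) n.
Proof.
case: k => [|k]; first exact: Prec0.
rewrite -(odd_double_half k); case: (odd k) => /=.
  rewrite add1n; exact: Prec_even.
rewrite add0n; exact: Prec_odd.
Qed.

Lemma sh_rec i n : sh (P i.+1) n = sh (P i) n + b4 i * sh (sh (P i.+2)) n.
Proof. case: n => [|m]; first by rewrite !sh0 mulr0 addr0. rewrite !shS (Prec i m); ring. Qed.

Definition Q (k : nat) : series := if k is k'.+1 then P (k'.*2).+1 else s_one.

Lemma beta0 : beta4 0 = b4 0. Proof. by []. Qed.
Lemma lam1 : lam4 1 = b4 0 * b4 1. Proof. by []. Qed.
Lemma betaS k : beta4 k.+1 = b4 (k.*2).+1 + b4 (k.*2).+2.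
Proof.
rewrite -[(k.*2).+2]/((k.+1).*2) b4_odd b4_even /beta4.
rewrite (_ : ((k.*2).+1 + 2 = k.+1 + k.+1 + 1)%N); last (rewrite -muln2; lia).
rewrite (_ : ((k.+1).*2 + 2 = k.+1 + k.+1 + 1 + 1)%N); last (rewrite -muln2; lia).
rewrite !exprD !expr1 (exprS _ k.+1).
move: ((2:int) ^+ k.+1) => a; ring.
Qed.
Lemma lamS k : lam4 k.+2 = b4 (k.*2).+2 * b4 (k.*2).+3.
Proof.
rewrite -[(k.*2).+2]/((k.+1).*2) -[(k.*2).+3]/((k.+1).*2).+1 b4_odd b4_even /lam4.
rewrite (_ : ((k.+1).*2.+1 + 2 = k.+2 + k.+2 + 1)%N); last (rewrite -muln2; lia).
rewrite (_ : ((k.+1).*2 + 2 = k.+2 + k.+2)%N); last (rewrite -muln2; lia).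
rewrite (_ : (3 * k.+2 + 1 = k.+2 + k.+2 + k.+2 + 1)%N); last lia.
rewrite !exprD !expr1.
move: ((2:int) ^+ k.+2) => a; ring.
Qed.

Lemma QS k : Q k.+1 = P (k.*2).+1. Proof. by []. Qed.
Lemma Qz : Q 0 = s_one. Proof. by []. Qed.

Lemma Qrec k n : Q k n = Q k.+1 n - beta4 k * sh (Q k.+1) n - lam4 k.+1 * sh (sh (Q k.+2)) n.
Proof.
case: k => [|k].
  rewrite Qz !QS.
  change (s_one n) with (P 0 n).
  change (0.*2).+1 with 1%N; change (1.*2).+1 with 3%N.
  have h1 := Prec 0 n. have h2 := sh_rec 1 n.
  rewrite h1 h2 beta0 lam1; ring.
rewrite !QS.
change ((k.+1).*2).+1 with ((k.*2).+3); change ((k.+2).*2).+1 with ((k.*2).+4).+1.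
have h1 := Prec (k.*2).+1 n. have h2 := Prec (k.*2).+2 n.
have h3 := sh_rec (k.*2).+3 n.
rewrite h1 h2 h3 betaS lamS; ring.
Qed.

Lemma Q0 k : Q k 0%N = 1.
Proof. by case: k => [|k] //; rewrite QS P0. Qed.

Lemma ex2 n : (n * (n + 3) = ex n * 2)%N.
Proof. elim: n => [|n IH]; first by []. rewrite exS; nia. Qed.

Lemma gfP n : gf4 n = P 1 n.
Proof.
change 1%N with ((0.*2).+1); rewrite P_odd Dn0 mulr1 mul0n addn0.
by rewrite /gf4 ex2 mulnK.
Qed.

Theorem mainTheorem4 :
  has_Jfraction beta4 lam4 gf4 /\ has_Sfraction b4 gf4.
Proof.
split => n; exists n.+1 => N hN.
  have := @J_conv _ _ _ Q0 Qrec N 0 n hN.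
  rewrite Qz mul_one_r QS => ->.
  by rewrite gfP.
have := @S_conv _ _ P0 Prec N 0 n hN.
rewrite [P 0]/= mul_one_r => ->.
by rewrite gfP.
Qed.
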